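(* Let \(f\colon\mathbb{R}^n\to\mathbb{R}\) be a real valued function and \(P\colon\mathbb{R}^n\to\mathbb{R}^n\) a vector field. For arbitrary sequences of real numbers \(\{a_k\}_{k\ge0},\{b_k^-\}_{k\ge0},\{b_k^+\}_{k\ge0}\) consider the time-dependent discrete Lagrangians and discrete forces \[L^k_d(z_0,z_1)=a_k\tfrac12\|z_1-z_0\|^2-b_k^-f(z_0)-b_{k+1}^+f(z_1),\] \[(F^k_d)^-(z_0,z_1)=-\tfrac{a_{k-1}}{a_k}(b_k^-+b_k^+)P(z_0),\qquad (F^k_d)^+(z_0,z_1)=(b_k^-+b_k^+)P(z_0).\] (1) If \(f\) is differentiable with \(P=\nabla f\) and \(a_k\neq0\) for all \(k\), then the free discrete Euler–Lagrange equations of \(L^k_d\) and the forced discrete Euler–Lagrange equations of \((L^k_d,(F^k_d)^-,(F^k_d)^+)\) are respectively equivalent to the recursive schemes \[y_{k+1}=x_k-\eta_kP(x_k),\quad x_{k+1}=y_{k+1}+\mu_k(x_k-x_{k-1})\] and \[\bar y_{k+1}=\bar x_k-\eta_kP(\bar x_k),\quad \bar x_{k+1}=\bar y_{k+1}+\mu_k(\bar y_{k+1}-\bar y_k),\] where \(\mu_{k+1}=a_k/a_{k+1}\) and \(\eta_k=(b_k^-+b_k^+)/a_k\) for \(k\ge0\). (2) Conversely, given a vector field \(P\) and arbitrary real sequences \(\{\mu_{k+1}\}_{k\ge0}\), \(\{\eta_k\}_{k\ge0}\), consider the sequences defined by the two schemes above. If \(P\) is conservative, \(P=\nabla f\), and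 \(\mu_{k+1}\neq0\) for all \(k\), then both schemes are variational: they are equivalent, respectively, to the free and forced discrete Euler–Lagrange equations of the discrete Lagrangians and forces above, with \(f\) the potential of \(P\) and with \(a_0=1\), \(a_{k+1}=a_k/\mu_{k+1}\) and \(b_k^\pm=\tfrac12a_k\eta_k\) for all \(k\ge0\).
   Context: For a family of discrete Lagrangians \(L^k_d\colon\mathbb{R}^n\times\mathbb{R}^n\to\mathbb{R}\) and discrete forces \((F^k_d)^\pm\), a sequence \((x_k)\) satisfies the forced discrete Euler–Lagrange equations if \(D_1L^k_d(x_k,x_{k+1})+D_2L^{k-1}_d(x_{k-1},x_k)+(F^k_d)^-(x_k,x_{k+1})+(F^{k-1}_d)^+(x_{k-1},x_k)=0\) for all interior indices \(k\ge1\); the free discrete Euler–Lagrange equations are the same with the force terms omitted, \(D_1L^k_d(x_k,x_{k+1})+D_2L^{k-1}_d(x_{k-1},x_k)=0\). Here \(D_1,D_2\) are partial derivatives (gradients) with respect to the first and second arguments. These equations are the stationarity conditions of the discrete (Lagrange–d'Alembert) variational principle \(\delta\sum_k L^k_d(x_k,x_{k+1})+\sum_k[(F^k_d)^-(x_k,x_{k+1})\delta x_k+(F^k_d)^+(x_k,x_{k+1})\delta x_{k+1}]=0\) for variations with fixed endpoints. *)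

(* Defs.v *)
From HB Require Import structures.
From mathcomp Require Import all_boot all_order all_algebra.
From mathcomp Require Import all_classical all_reals all_analysis.
Set Implicit Arguments. Unset Strict Implicit. Unset Printing Implicit Defensive.
Import Order.TTheory GRing.Theory Num.Theory.
Import numFieldNormedType.Exports.
Local Open Scope ring_scope.

Definition sqnorm {R : realType} {n : nat} (z : 'rV[R]_n) : R :=
  \sum_(i < n) (z ord0 i) ^+ 2.

Definition grad {R : realType} {n : nat} (g : 'rV[R]_n -> R) (x : 'rV[R]_n)
  : 'rV[R]_n := \row_(i < n) ('D_(delta_mx ord0 i) g x).

Definition D1 {R : realType} {n : nat} (L : 'rV[R]_n -> 'rV[R]_n -> R)
  (z0 z1 : 'rV[R]_n) : 'rV[R]_n := grad (fun z => L z z1) z0.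
Definition D2 {R : realType} {n : nat} (L : 'rV[R]_n -> 'rV[R]_n -> R)
  (z0 z1 : 'rV[R]_n) : 'rV[R]_n := grad (fun z => L z0 z) z1.

Definition free_DEL {R : realType} {n : nat}
  (L : nat -> 'rV[R]_n -> 'rV[R]_n -> R) (x : nat -> 'rV[R]_n) : Prop :=
  forall k : nat, (0 < k)%N ->
    D1 (L k) (x k) (x k.+1) + D2 (L k.-1) (x k.-1) (x k) = 0.

Definition forced_DEL {R : realType} {n : nat}
  (L : nat -> 'rV[R]_n -> 'rV[R]_n -> R)
  (Fm Fp : nat -> 'rV[R]_n -> 'rV[R]_n -> 'rV[R]_n)
  (x : nat -> 'rV[R]_n) : Prop :=
  forall k : nat, (0 < k)%N ->
    D1 (L k) (x k) (x k.+1) + D2 (L k.-1) (x k.-1) (x k)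
    + Fm k (x k) (x k.+1) + Fp k.-1 (x k.-1) (x k) = 0.

Definition Ld {R : realType} {n : nat} (a bm bp : nat -> R)
  (f : 'rV[R]_n -> R) (k : nat) (z0 z1 : 'rV[R]_n) : R :=
  a k * (2^-1 * sqnorm (z1 - z0)) - bm k * f z0 - bp k.+1 * f z1.

(* (F^k_d)^-(z0,z1) = -(a_{k-1}/a_k)(b^-_k+b^+_k) P(z0)   (only used for k >= 1) *)
Definition Fdm {R : realType} {n : nat} (a bm bp : nat -> R)
  (P : 'rV[R]_n -> 'rV[R]_n) (k : nat) (z0 z1 : 'rV[R]_n) : 'rV[R]_n :=
  (- (a k.-1 / a k) * (bm k + bp k)) *: P z0.

Definition Fdp {R : realType} {n : nat} (bm bp : nat -> R)
  (P : 'rV[R]_n -> 'rV[R]_n) (k : nat) (z0 z1 : 'rV[R]_n) : 'rV[R]_n :=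
  (bm k + bp k) *: P z0.

Definition ystep {R : realType} {n : nat} (eta : nat -> R)
  (P : 'rV[R]_n -> 'rV[R]_n) (x y : nat -> 'rV[R]_n) : Prop :=
  forall k : nat, y k.+1 = x k - eta k *: P (x k).

Definition scheme_free {R : realType} {n : nat} (mu : nat -> R)
  (x y : nat -> 'rV[R]_n) : Prop :=
  forall k : nat, (0 < k)%N -> x k.+1 = y k.+1 + mu k *: (x k - x k.-1).

Definition scheme_forced {R : realType} {n : nat} (mu : nat -> R)
  (x y : nat -> 'rV[R]_n) : Prop :=
  forall k : nat, (0 < k)%N -> x k.+1 = y k.+1 + mu k *: (y k.+1 - y k).

Fixpoint aseq {R : realType} (mu : nat -> R) (k : nat) : R :=
  match k with
  | 0 => 1
  | k'.+1 => aseq mu k' / mu k'.+1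
  end.

(* Main.v *)
Require Import Defs.
From HB Require Import structures.
From mathcomp Require Import all_boot all_order all_algebra.
From mathcomp Require Import all_classical all_reals all_analysis.
From mathcomp Require Import ring lra.
Import Order.TTheory GRing.Theory Num.Theory.
Import numFieldNormedType.Exports.
Local Open Scope ring_scope.
Section S.
Variables (R : realType) (n : nat).
Lemma is_derive_coord (j : 'I_n) (x v : 'rV[R]_n) :
  is_derive x v (fun z : 'rV[R]_n => z ord0 j) (v ord0 j).
Proof.
have @f : {linear 'rV[R]_n -> R}.
  by exists (fun N : 'rV[R]_n => N ord0 j); do 2![eexists]; do ?[constructor];
     rewrite ?mxE// => ? *; rewrite ?mxE//; move=> ?; rewrite !mxE.
apply: DeriveDef; first exact/diff_derivable/differentiable_coord.
rewrite deriveE; last exact: differentiable_coord.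
rewrite (_ : (fun _ => _) = f) //. rewrite diff_lin //. exact: coord_continuous.
Qed.

Lemma is_derive_sq (w x v : 'rV[R]_n) :
  is_derive x v (fun z => sqnorm (z - w))
    (\sum_(j < n) (2 * (x ord0 j - w ord0 j) * v ord0 j)).
Proof.
have -> : (fun z => sqnorm (z - w)) =
   \sum_(j < n) ((fun z : 'rV[R]_n => z ord0 j) - cst (w ord0 j)) ^+ 2.
  by apply: funext => z; rewrite fct_sumE /sqnorm; apply: eq_bigr => j _;
     rewrite exprfctE !fctE !mxE.
apply: is_derive_sum => j.
apply: is_derive_eq.
  exact: (is_deriveX 2 (is_deriveB (is_derive_coord j x v) (is_derive_cst (w ord0 j) x v))).
rewrite /= !fctE subr0 expr1 /GRing.scale /=. done.
Qed.

Lemma grad_L (al be ga : R) (g : 'rV[R]_n -> R) (dg : forall z, differentiable g z)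
  (w x : 'rV[R]_n) :
  grad (fun z => al * (2^-1 * sqnorm (z - w)) - be * g z + ga) x
  = al *: (x - w) - be *: grad g x.
Proof.
apply/rowP => i; rewrite !mxE.
set e := delta_mx ord0 i.
have -> : (fun z => al * (2^-1 * sqnorm (z - w)) - be * g z + ga) =
  (al * 2^-1) *: (fun z => sqnorm (z - w)) - be *: g + cst ga.
  by apply: funext => z; rewrite !fctE /GRing.scale /= mulrA.
have Hg : is_derive x e g ('D_e g x) by apply: derivableP; apply: diff_derivable.
have H := is_deriveD (is_deriveB (is_deriveZ (al * 2^-1) (is_derive_sq w x e))
   (is_deriveZ be Hg)) (is_derive_cst ga x e).
rewrite (@derive_val _ _ _ _ _ _ _ H) /GRing.scale /= addr0.
rewrite (bigD1 i) //= big1 => [|j /negbTE ji]; last by rewrite /e mxE ji andbF mulr0.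
rewrite /e mxE !eqxx /= addr0 mulr1; congr (_ - _); rewrite mulrA -(mulrA al) mulVf ?pnatr_eq0 // mulr1; by rewrite (ord1 0).
Qed.

Lemma sqnormN (v : 'rV[R]_n) : sqnorm (- v) = sqnorm v.
Proof. by rewrite /sqnorm; apply: eq_bigr => j _; rewrite mxE sqrrN. Qed.

Lemma D1_Ld (a bm bp : nat -> R) (f : 'rV[R]_n -> R)
  (df : forall z, differentiable f z) k z0 z1 :
  D1 (Ld a bm bp f k) z0 z1 = a k *: (z0 - z1) - bm k *: grad f z0.
Proof.
rewrite /D1.
have -> : (fun z => Ld a bm bp f k z z1) = (fun z => a k * (2^-1 * sqnorm (z - z1)) - bm k * f z + (- (bp k.+1 * f z1))).
  apply: funext => z. rewrite /Ld -sqnormN opprB. by [].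
exact: grad_L.
Qed.

Lemma D2_Ld (a bm bp : nat -> R) (f : 'rV[R]_n -> R)
  (df : forall z, differentiable f z) k z0 z1 :
  D2 (Ld a bm bp f k) z0 z1 = a k *: (z1 - z0) - bp k.+1 *: grad f z1.
Proof.
rewrite /D2.
have -> : (fun z => Ld a bm bp f k z0 z) = (fun z => a k * (2^-1 * sqnorm (z - z0)) - bp k.+1 * f z + (- (bm k * f z0))).
  apply: funext => z. rewrite /Ld. by rewrite addrAC.
exact: grad_L.
Qed.

Lemma scale_sub_eq0 (c : R) (u v : 'rV[R]_n) : c != 0 ->
  (c *: (u - v) = 0 <-> v = u).
Proof.
move=> c0; split; last by move=> ->; rewrite subrr scaler0.
by move/eqP; rewrite scaler_eq0 (negbTE c0) /= subr_eq0 => /eqP ->.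
Qed.
Lemma part1 (f : 'rV[R]_n -> R) (P : 'rV[R]_n -> 'rV[R]_n) (a bm bp mu eta : nat -> R) :
  (forall z, differentiable f z) -> (forall z, P z = grad f z) ->
  (forall k, a k != 0) ->
  (forall k, (0 < k)%N -> mu k = a k.-1 / a k) ->
  (forall k, eta k = (bm k + bp k) / a k) ->
  (forall x y : nat -> 'rV[R]_n, ystep eta P x y ->
     (free_DEL (Ld a bm bp f) x <-> scheme_free mu x y)) /\
  (forall x y : nat -> 'rV[R]_n, ystep eta P x y ->
     (forced_DEL (Ld a bm bp f) (Fdm a bm bp P) (Fdp bm bp P) x
         <-> scheme_forced mu x y)).
Proof.
move=> df dP a0 hmu heta; split => x y hy.
- have key : forall k, (0 < k)%N ->
    (D1 (Ld a bm bp f k) (x k) (x k.+1) + D2 (Ld a bm bp f k.-1) (x k.-1) (x k) = 0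
     <-> x k.+1 = y k.+1 + mu k *: (x k - x k.-1)).
    case=> [//|m] _ /=.
    rewrite D1_Ld // D2_Ld // hy hmu // heta -!dP.
    suff -> : a m.+1 *: (x m.+1 - x m.+2) - bm m.+1 *: P (x m.+1) +
      (a m *: (x m.+1 - x m) - bp m.+1 *: P (x m.+1)) =
      a m.+1 *: (x m.+1 - (bm m.+1 + bp m.+1) / a m.+1 *: P (x m.+1) +
        a m / a m.+1 *: (x m.+1 - x m) - x m.+2) by exact: scale_sub_eq0.
    apply/rowP => i; rewrite !mxE /=. field. exact: a0.
  by split=> H k k0; apply/(key k k0)/H.
- have key : forall k, (0 < k)%N ->
    (D1 (Ld a bm bp f k) (x k) (x k.+1) + D2 (Ld a bm bp f k.-1) (x k.-1) (x k)
     + Fdm a bm bp P k (x k) (x k.+1) + Fdp bm bp P k.-1 (x k.-1) (x k) = 0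
     <-> x k.+1 = y k.+1 + mu k *: (y k.+1 - y k)).
    case=> [//|m] _ /=.
    rewrite D1_Ld // D2_Ld // /Fdm /Fdp !hy hmu // !heta -!dP /=.
    suff -> : a m.+1 *: (x m.+1 - x m.+2) - bm m.+1 *: P (x m.+1) +
      (a m *: (x m.+1 - x m) - bp m.+1 *: P (x m.+1)) +
      (- (a m / a m.+1) * (bm m.+1 + bp m.+1)) *: P (x m.+1) +
      (bm m + bp m) *: P (x m) =
      a m.+1 *: (x m.+1 - (bm m.+1 + bp m.+1) / a m.+1 *: P (x m.+1) +
        a m / a m.+1 *: (x m.+1 - (bm m.+1 + bp m.+1) / a m.+1 *: P (x m.+1)
          - (x m - (bm m + bp m) / a m *: P (x m))) - x m.+2) by exact: scale_sub_eq0.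
    apply/rowP => i; rewrite !mxE /=. field. by rewrite ?a0.
  by split=> H k k0; apply/(key k k0)/H.
Qed.
End S.

Lemma aseq_neq0 (R : realType) (mu : nat -> R) : (forall k, mu k.+1 != 0) ->
  forall k, aseq mu k != 0.
Proof.
move=> h; elim=> [|k IH] /=; first exact: oner_neq0.
by rewrite mulf_neq0 // invr_neq0.
Qed.

Theorem theorem7p2 (R : realType) (n : nat) :
  (* Part (1) *)
  (forall (f : 'rV[R]_n -> R) (P : 'rV[R]_n -> 'rV[R]_n) (a bm bp : nat -> R),
     (forall z, differentiable f z) -> (forall z, P z = grad f z) ->
     (forall k, a k != 0) ->
     let mu := fun k : nat => a k.-1 / a k in
     let eta := fun k : nat => (bm k + bp k) / a k in
     (forall x y : nat -> 'rV[R]_n, ystep eta P x y ->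
        (free_DEL (Ld a bm bp f) x <-> scheme_free mu x y)) /\
     (forall x y : nat -> 'rV[R]_n, ystep eta P x y ->
        (forced_DEL (Ld a bm bp f) (Fdm a bm bp P) (Fdp bm bp P) x
         <-> scheme_forced mu x y))) /\
  (* Part (2) *)
  (forall (f : 'rV[R]_n -> R) (P : 'rV[R]_n -> 'rV[R]_n) (mu eta : nat -> R),
     (forall z, differentiable f z) -> (forall z, P z = grad f z) ->
     (forall k, mu k.+1 != 0) ->
     let a := aseq mu in
     let b := fun k : nat => 2^-1 * a k * eta k in
     (forall x y : nat -> 'rV[R]_n, ystep eta P x y ->
        (scheme_free mu x y <-> free_DEL (Ld a b b f) x)) /\
     (forall x y : nat -> 'rV[R]_n, ystep eta P x y ->
        (scheme_forced mu x y
         <-> forced_DEL (Ld a b b f) (Fdm a b b P) (Fdp b b P) x))).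
Proof.
split.
- move=> f P a bm bp df dP a0 mu eta.
  by apply: part1 => // k; rewrite /mu.
- move=> f P mu eta df dP h0 a b.
  have a0 : forall k, a k != 0 by apply: aseq_neq0.
  have hmu : forall k, (0 < k)%N -> mu k = a k.-1 / a k.
    case=> [//|m] _ /=; rewrite /a /=; field.
    by rewrite h0 aseq_neq0.
  have heta : forall k, eta k = (b k + b k) / a k.
    move=> k; rewrite /b; field; exact: a0.
  have [H1 H2] := @part1 R n f P a b b mu eta df dP a0 hmu heta.
  by split=> x y hy; [exact: iff_sym (H1 x y hy) | exact: iff_sym (H2 x y hy)].
Qed.
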